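(* Let $T$ be a tree on $n\geq 3$ vertices having exactly $p$ pendant vertices (vertices of degree $1$). Then $$\mathrm{rank}(\mathrm{Max4PC}_T)=2(n-p).$$
   Context: For a tree $T$ with vertex set $V$, $|V|=n$, let $d_{x,y}$ denote the distance (number of edges on the path) between vertices $x,y$ in $T$. The maximum four point condition matrix $\mathrm{Max4PC}_T$ is the $\binom{n}{2}\times\binom{n}{2}$ matrix whose rows and columns are indexed by the $2$-element subsets of $V$, and whose entry in the row indexed by $\{w,x\}$ and the column indexed by $\{y,z\}$ is $$\max\{d_{w,x}+d_{y,z},\ d_{w,y}+d_{x,z},\ d_{w,z}+d_{x,y}\}.$$ *)

(* Defs.v *)
From HB Require Import structures.
From mathcomp Require Import all_boot all_order all_algebra.
Set Implicit Arguments. Unset Strict Implicit. Unset Printing Implicit Defensive.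
Import Order.TTheory GRing.Theory Num.Theory.

Section Defs.
Variable V : finType.
Variable e : rel V.

(* A simple graph on V is given by a symmetric irreflexive relation e. *)
Definition connected_graph : Prop := forall x y : V, connect e x y.

Definition acyclic_graph : Prop := forall c : seq V, ucycle e c -> size c < 3.

Definition is_tree : Prop :=
  [/\ symmetric e, irreflexive e, connected_graph & acyclic_graph].

Definition deg (x : V) : nat := #|[set y | e x y]|.

Definition npendant : nat := #|[set x | deg x == 1]|.

Definition walk_of_len (x y : V) (k : nat) : bool :=
  [exists t : k.-tuple V, path e x t && (last x t == y)].

(* distance: the least k such that there is a walk with k edges from x to y
   (for connected graphs some k < #|V| works; the value #|V| is a dummy
   default, never reached for connected graphs). *)
Definition dist (x y : V) : nat := find (walk_of_len x y) (iota 0 #|V|).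

Definition max4 (w x y z : V) : nat :=
  maxn (dist w x + dist y z) (maxn (dist w y + dist x z) (dist w z + dist x y)).

(* entry for 2-element subsets A = {w,x}, B = {y,z}; max4 is invariant under
   swapping w,x or y,z, so the choice of enumeration order is irrelevant. *)
Definition max4pc_entry (A B : {set V}) : nat :=
  match enum A, enum B with
  | [:: w; x], [:: y; z] => max4 w x y z
  | _, _ => 0
  end.

Definition pairs := {A : {set V} | #|A| == 2}.

Definition Max4PC (R : nzRingType) : 'M[R]_(#|{: pairs}|) :=
  \matrix_(i, j) ((max4pc_entry (val (enum_val i)) (val (enum_val j)))%:R)%R.

End Defs.

(* Main.v *)
Require Import Defs.
From HB Require Import structures.
From mathcomp Require Import all_boot all_order all_algebra.
From mathcomp Require Import zify ring lra.
Set Implicit Arguments. Unset Strict Implicit. Unset Printing Implicit Defensive.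

Section Walks.
Variable V : finType.
Variable e : rel V.
Hypothesis econn : connected_graph e.

Lemma walkP x y k : reflect (exists2 s : seq V, size s = k & path e x s && (last x s == y))
  (walk_of_len e x y k).
Proof.
apply: (iffP existsP) => [[t Ht]|[s Hs Hp]]; first by exists (val t); rewrite ?size_tuple.
by exists (@Tuple k V s (introT eqP Hs)).
Qed.

Lemma walk0 x y : walk_of_len e x y 0 = (x == y).
Proof.
apply/walkP/eqP => [[s Hs /andP[_ /eqP <-]]|->]; first by case: s Hs.
by exists [::]; rewrite //= eqxx.
Qed.

Lemma walkS x y k : walk_of_len e x y k.+1 -> exists2 z, e x z & walk_of_len e z y k.
Proof.
move/walkP=> [[|z s] //= [Hs] /andP[/andP[exz Hp] Hl]]; exists z => //.
by apply/walkP; exists s => //; rewrite Hp.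
Qed.

Lemma walkS' x y z k : e x z -> walk_of_len e z y k -> walk_of_len e x y k.+1.
Proof.
move=> exz /walkP[s Hs /andP[Hp Hl]]; apply/walkP; exists (z :: s); first by rewrite /= Hs.
by rewrite /= exz Hp.
Qed.

Lemma walk_exists x y : exists2 k, k < #|V| & walk_of_len e x y k.
Proof.
have /connectP[p Hp ->] := econn x y.
case: (shortenP Hp) => p' Hp' Hu _.
exists (size p').
  have := max_card (mem (x :: p')); rewrite (card_uniqP Hu) /=; by [].
by apply/walkP; exists p' => //; rewrite Hp' eqxx.
Qed.

Lemma dist_lt x y : dist e x y < #|V|.
Proof.
have [k Hk Hw] := walk_exists x y.
rewrite /dist -[X in _ < X](size_iota 0 #|V|) -has_find.
by apply/hasP; exists k => //; rewrite mem_iota.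
Qed.

Lemma dist_walk x y : walk_of_len e x y (dist e x y).
Proof.
have := dist_lt x y; rewrite /dist => H.
have := H; rewrite -[X in _ < X](size_iota 0 #|V|) -has_find => Hh.
have := nth_find 0 Hh; rewrite nth_iota //.
Qed.

Lemma dist_min x y k : walk_of_len e x y k -> dist e x y <= k.
Proof.
move=> Hw; case: (ltnP k #|V|) => Hk; last by apply: leq_trans (ltnW (dist_lt x y)) Hk.
rewrite leqNgt; apply/negP => Hlt.
have := before_find 0 Hlt; rewrite nth_iota // add0n Hw; by [].
Qed.

Lemma dist_xx x : dist e x x = 0.
Proof. by apply/eqP; rewrite -leqn0; apply: dist_min; rewrite walk0. Qed.

Lemma dist0 x y : dist e x y = 0 -> x = y.
Proof. by move=> H; have := dist_walk x y; rewrite H walk0 => /eqP. Qed.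

Lemma dist_edge x y z : e x z -> dist e x y <= (dist e z y).+1.
Proof. by move=> exz; apply: dist_min; apply: walkS' exz (dist_walk _ _). Qed.

Lemma dist_step x y : x != y -> exists2 z, e x z & (dist e z y).+1 = dist e x y.
Proof.
move=> nxy; have := dist_walk x y.
case Hd: (dist e x y) => [|k]; first by move: (dist0 Hd) nxy => ->; rewrite eqxx.
move=> /walkS[z exz Hw]; exists z => //.
have := dist_min Hw; have := dist_edge y exz; rewrite Hd; lia.
Qed.

Lemma dist_unique (D : V -> V -> nat) :
  (forall x, D x x = 0) ->
  (forall x y z, e x z -> D x y <= (D z y).+1) ->
  (forall x y, x != y -> exists2 z, e x z & (D z y).+1 = D x y) ->
  forall x y, D x y = dist e x y.
Proof.
move=> D0 D1 D2.
have W : forall k x y, D x y = k -> walk_of_len e x y k.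
  elim=> [|k IH] x y Hk.
    rewrite walk0; case: (eqVneq x y) => // nxy; have [z _] := D2 _ _ nxy; by rewrite Hk.
  have nxy : x != y by apply/eqP => exy; move: Hk; rewrite exy D0.
  have [z exz Hz] := D2 _ _ nxy; apply: walkS' exz (IH _ _ _); rewrite Hk in Hz; by case: Hz.
have L : forall k x y, walk_of_len e x y k -> D x y <= k.
  elim=> [|k IH] x y; first by rewrite walk0 => /eqP->; rewrite D0.
  move=> /walkS[z exz Hw]; apply: leq_trans (D1 _ y _ exz) _; exact: IH.
move=> x y; apply/eqP; rewrite eqn_leq; apply/andP; split.
  exact: L (dist_walk x y).
exact: dist_min (W _ _ _ erefl).
Qed.

End Walks.

Section Rooted.
Variable V : finType.
Variable e : rel V.
Hypothesis esymm : symmetric e.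
Hypothesis eirr : irreflexive e.
Hypothesis econn : connected_graph e.
Hypothesis eacyc : acyclic_graph e.
Variable r : V.

Lemma rev_walk a p : path e a p ->
  exists q, [/\ path e (last a p) q, last (last a p) q = a & {subset q <= a :: p}].
Proof.
move=> Hp; exists (rev (belast a p)); split.
- by rewrite rev_path (@eq_path _ _ e) // => x y; rewrite esymm.
- by case: p {Hp} => //= y p; rewrite rev_cons last_rcons.
- by move=> z; rewrite mem_rev => /mem_belast.
Qed.

Lemma no_cycle a b x q : path e a q -> last a q = b -> a != b ->
  x \notin a :: q -> e x a -> e b x -> False.
Proof.
move=> Hp; case: (shortenP Hp) => q' Hq' Hu Hsub Hl nab nx exa ebx.
have := (eacyc : forall c : seq V, ucycle e c -> size c < 3) (x :: a :: q'); rewrite /ucycle /= rcons_path Hq' Hl exa ebx /=.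
have -> : x \notin a :: q'.
  apply/negP; rewrite inE => /orP[/eqP xa|/Hsub xq]; move: nx; rewrite inE ?xa ?eqxx ?xq ?orbT //.
move: Hu => /= /andP[-> ->] /=.
case: q' {Hq' Hsub} Hl => [/= Hab|y l _]; last by move/(_ isT).
by rewrite Hab eqxx in nab.
Qed.

Definition h x := dist e x r.

Definition par x := if x == r then r else odflt x [pick z | e x z && ((h z).+1 == h x)].

Lemma h_r : h r = 0. Proof. exact: dist_xx. Qed.
Lemma h0 x : h x = 0 -> x = r. Proof. exact: dist0. Qed.

Lemma par_spec x : x != r -> e x (par x) /\ (h (par x)).+1 = h x.
Proof.
move=> nxr; rewrite /par (negbTE nxr).
case: pickP => [z /andP[exz /eqP hz]|H] //=.
have [z exz hz] := dist_step econn nxr; have := H z; by rewrite exz hz eqxx.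
Qed.

Lemma par_r : par r = r. Proof. by rewrite /par eqxx. Qed.

Lemma h_par x : h (par x) = (h x).-1.
Proof.
case: (eqVneq x r) => [->|nxr]; first by rewrite par_r h_r.
by have [_ <-] := par_spec nxr.
Qed.

Lemma h_edge x z : e x z -> h x <= (h z).+1.
Proof. exact: dist_edge. Qed.

Lemma h_iter k x : h (iter k par x) = h x - k.
Proof. elim: k => [|k IH] /=; first by rewrite subn0. by rewrite h_par IH; lia. Qed.

Lemma iter_r k : iter k par r = r.
Proof. by elim: k => //= k ->; rewrite par_r. Qed.

Lemma iter_ge k x : h x <= k -> iter k par x = r.
Proof. by move=> hk; apply: h0; rewrite h_iter; lia. Qed.

Definition dp y := traject par (par y) (h y).

Lemma dp_path y : path e y (dp y).
Proof.
rewrite /dp; have : h y <= h y by [].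
move: {-2}(h y) => n; elim: n y => [//|n IH] y Hn.
rewrite trajectS /=.
have nyr : y != r by apply/eqP => yr; move: Hn; rewrite yr h_r.
have [eyp hp] := par_spec nyr; rewrite eyp /=; apply: IH; lia.
Qed.

Lemma dp_last y : last y (dp y) = r.
Proof. by rewrite /dp last_traject; apply: iter_ge. Qed.

Lemma dp_mem y z : z \in dp y -> h z < h y.
Proof.
move=> /trajectP[i Hi ->]; rewrite -iterSr h_iter; lia.
Qed.

Lemma walk_ab a b : exists q, [/\ path e a q, last a q = b & {subset q <= dp a ++ b :: dp b}].
Proof.
have [q [Hq Hl Hs]] := rev_walk (dp_path b).
rewrite dp_last in Hq Hl.
exists (dp a ++ q); rewrite cat_path last_cat dp_path dp_last Hq Hl; split => // z.
rewrite !mem_cat => /orP[->//|/Hs ->]; by rewrite orbT.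
Qed.

Lemma edge_hne x z : e x z -> h x != h z.
Proof.
move=> exz; apply/eqP => hxz.
have nxz : x != z by apply/eqP => xz; move: exz; rewrite xz eirr.
case: (eqVneq x r) => [xr|nxr].
  by move: hxz nxz; rewrite xr h_r => /esym/h0 ->; rewrite eqxx.
have [exp hp] := par_spec nxr.
have [q [Hq Hl Hs]] := walk_ab (par x) z.
apply: (no_cycle Hq Hl _ _ exp); last by rewrite esymm.
  by apply/eqP => pz; move: hp; rewrite pz hxz; lia.
rewrite inE negb_or; apply/andP; split.
  by apply/eqP => xp; move: hp; rewrite -xp; lia.
apply/negP => /Hs; rewrite mem_cat inE => /or3P[/dp_mem|/eqP xz|/dp_mem].
- lia.
- by rewrite xz eqxx in nxz.
- rewrite hxz; lia.
Qed.

Lemma par_uniq x z : e x z -> (h z).+1 = h x -> z = par x.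
Proof.
move=> exz hz; have nxr : x != r by apply/eqP => xr; move: hz; rewrite xr h_r.
have [exp hp] := par_spec nxr.
case: (eqVneq z (par x)) => // nzp; exfalso.
have [q [Hq Hl Hs]] := walk_ab z (par x).
apply: (no_cycle Hq Hl nzp _ exz); last by rewrite esymm.
rewrite inE negb_or; apply/andP; split.
  by apply/eqP => xz; move: hz; rewrite xz; lia.
apply/negP => /Hs; rewrite mem_cat inE => /or3P[/dp_mem|/eqP xp|/dp_mem]; try lia.
by move: hp; rewrite -xp; lia.
Qed.

Lemma edge_par x z : e x z -> z = par x \/ x = par z.
Proof.
move=> exz; have := edge_hne exz; have := h_edge exz.
have ezx : e z x by rewrite esymm.
have := h_edge ezx => H1 H2 /eqP H3.
case: (ltngtP (h x) (h z)) => H.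
- right; apply: par_uniq ezx _; lia.
- left; apply: par_uniq exz _; lia.
- by move: H3; rewrite H.
Qed.

Lemma par_ne x : x != r -> par x != x.
Proof. by move=> nxr; have [_ hp] := par_spec nxr; apply/eqP => px; move: hp; rewrite px; lia. Qed.

Definition anc v x := (h v <= h x) && (iter (h x - h v) par x == v).

Lemma ancP v x : reflect (exists k, v = iter k par x) (anc v x).
Proof.
apply: (iffP andP) => [[_ /eqP <-]|[k ->]]; first by exists (h x - h v).
case: (leqP k (h x)) => hk.
  rewrite h_iter; split; first lia.
  by have -> : h x - (h x - k) = k by lia.
rewrite iter_ge ?h_r; last lia.
by rewrite subn0 iter_ge.
Qed.

Lemma anc_refl x : anc x x. Proof. by apply/ancP; exists 0. Qed.
Lemma anc_r x : anc r x. Proof. by apply/ancP; exists (h x); rewrite iter_ge. Qed.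
Lemma anc_of_r v : anc v r -> v = r.
Proof. by move/ancP=> [k ->]; rewrite iter_r. Qed.
Lemma anc_trans u v x : anc u v -> anc v x -> anc u x.
Proof.
move=> /ancP[j ->] /ancP[k ->]; apply/ancP; exists (j + k); by rewrite iterD.
Qed.
Lemma anc_total u v x : anc u x -> anc v x -> anc u v || anc v u.
Proof.
move=> /ancP[i ->] /ancP[j ->]; case: (leqP j i) => H.
  apply/orP; left; apply/ancP; exists (i - j); rewrite -iterD; congr iter; lia.
apply/orP; right; apply/ancP; exists (j - i); rewrite -iterD; congr iter; lia.
Qed.
Lemma anc_par v x : anc v (par x) -> anc v x.
Proof. move=> H; apply: anc_trans H _; apply/ancP; by exists 1. Qed.
Lemma anc_cases v x : anc v x -> v = x \/ anc v (par x).
Proof.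
move=> /ancP[[|k] ->]; [by left|right]; apply/ancP; exists k; by rewrite iterSr.
Qed.
Lemma anc_h v x : anc v x -> h v <= h x.
Proof. by case/andP. Qed.
Lemma anc_eq v x : anc v x -> h v = h x -> v = x.
Proof. by move=> /andP[_ /eqP H] hv; rewrite -H hv subnn. Qed.

Lemma anc_child x y : anc x y -> x != y -> exists c, [/\ par c = x, c != r & anc c y].
Proof.
move=> /andP[H1 /eqP H2] nxy.
have Hlt : h x < h y.
  rewrite ltn_neqAle H1 andbT; apply/eqP => hxy.
  have : anc x y by rewrite /anc H1 H2 eqxx.
  move/anc_eq => /(_ hxy) xy; by rewrite xy eqxx in nxy.
exists (iter (h y - h x).-1 par y); split.
- by rewrite -iterS prednK ?subn_gt0.
- apply/eqP => Hc; have := h_iter (h y - h x).-1 y; rewrite Hc h_r; lia.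
- by apply/ancP; eexists.
Qed.

Definition Ap x := [set v | anc v x & v != r].

Lemma Ap_r : Ap r = set0.
Proof. by apply/setP => v; rewrite !inE; case: (boolP (anc v r)) => // /anc_of_r ->; rewrite eqxx. Qed.

Lemma Ap_par x : x != r -> Ap x = x |: Ap (par x).
Proof.
move=> nxr; apply/setP => v; rewrite !inE.
case: (eqVneq v x) => [->|nvx] /=; first by rewrite anc_refl nxr.
case: (boolP (anc v (par x))) => [/anc_par -> //|H].
case: (boolP (anc v x)) => // /anc_cases [vx|H']; first by rewrite vx eqxx in nvx.
by rewrite H' in H.
Qed.

Lemma notin_Ap_par x : x \notin Ap (par x).
Proof.
rewrite inE negb_and; case: (eqVneq x r) => [->|nxr]; first by apply/orP; right; rewrite negbK.
apply/orP; left; apply/negP => /anc_h; rewrite h_par.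
have [_ hp] := par_spec nxr; lia.
Qed.

Lemma card_Ap x : #|Ap x| = h x.
Proof.
have [n Hx] : exists n, h x = n by eexists.
elim: n x Hx => [|n IH] x Hx.
  by rewrite (h0 Hx) Ap_r cards0 h_r.
have nxr : x != r by apply/eqP => xr; move: Hx; rewrite xr h_r.
rewrite Ap_par // cardsU1 notin_Ap_par IH //; rewrite h_par Hx //.
Qed.

Definition NS (s : seq V) := #|[set v | (v != r) && all (anc v) s]|.

Lemma NS_eq s t : (forall v, all (anc v) s = all (anc v) t) -> NS s = NS t.
Proof. by move=> H; rewrite /NS; apply: eq_card => v; rewrite !inE H. Qed.

Lemma NS_le s t : (forall v, all (anc v) t -> all (anc v) s) -> NS t <= NS s.
Proof.
move=> H; apply: subset_leq_card; apply/subsetP => v; rewrite !inE => /andP[-> /H] //.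
Qed.

Lemma NS1 x : NS [:: x] = h x.
Proof.
rewrite -card_Ap /NS; apply: eq_card => v.
by rewrite !inE /= andbT andbC.
Qed.

Lemma NS_par x y : x != r -> NS [:: x; y] = NS [:: par x; y] + anc x y.
Proof.
move=> nxr.
have Hv : forall v, anc v x = (v == x) || anc v (par x).
  move=> v; case: (eqVneq v x) => [->|nvx] /=; first by rewrite anc_refl.
  case: (boolP (anc v (par x))) => [/anc_par -> //|H].
  by case: (boolP (anc v x)) => // /anc_cases [vx|H']; [rewrite vx eqxx in nvx|rewrite H' in H].
have nx : x \notin [set v | (v != r) && all (anc v) [:: par x; y]].
  rewrite inE /= negb_and; apply/orP; right; apply/negP => /andP[/anc_h].
  rewrite h_par; have [_ hp] := par_spec nxr; lia.
rewrite /NS; case: (boolP (anc x y)) => Hxy /=.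
  transitivity #|x |: [set v | (v != r) && all (anc v) [:: par x; y]]|.
    apply: eq_card => v; rewrite !inE /= Hv.
    by case: (eqVneq v x) => [->|] //=; rewrite nxr Hxy.
  by rewrite cardsU1 nx addnC.
rewrite addn0; apply: eq_card => v; rewrite !inE /= Hv.
by case: (eqVneq v x) => [->|] //=; rewrite (negbTE Hxy) !andbF.
Qed.

Lemma NS2_le x y : NS [:: x; y] <= h x.
Proof. by rewrite -NS1; apply: NS_le => v /= /andP[-> _]. Qed.

Lemma NS2C x y : NS [:: x; y] = NS [:: y; x].
Proof. by apply: NS_eq => v /=; rewrite !andbT andbC. Qed.

Lemma NS2_le' x y : NS [:: x; y] <= h y.
Proof. by rewrite NS2C NS2_le. Qed.

Lemma NSxx x : NS [:: x; x] = h x.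
Proof. by rewrite -NS1; apply: NS_eq => v /=; rewrite andbA andbb. Qed.

Definition D x y := h x + h y - 2 * NS [:: x; y].

Lemma D_par x y : x != r ->
  (anc x y -> (D x y).+1 = D (par x) y) /\ (~~ anc x y -> D x y = (D (par x) y).+1).
Proof.
move=> nxr; have [_ hp] := par_spec nxr.
have := NS_par y nxr; have := NS2_le (par x) y; have := NS2_le' (par x) y.
have := NS2_le x y; have := NS2_le' x y.
rewrite /D; case: (anc x y) => /=; split => //; lia.
Qed.

Lemma D_eq_dist x y : D x y = dist e x y.
Proof.
apply: (dist_unique econn) => {x y}.
- by move=> x; rewrite /D NSxx; lia.
- move=> x y z exz; case: (edge_par exz) => Hz; rewrite Hz.
    have nxr : x != r by apply/eqP => xr; move: exz; rewrite Hz xr par_r eirr.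
    by have [H1 H2] := D_par y nxr; case: (boolP (anc x y)) => H; [move: (H1 H)|rewrite (H2 H)]; lia.
  have nzr : z != r by apply/eqP => zr; move: exz; rewrite Hz zr par_r eirr.
  by have [H1 H2] := D_par y nzr; case: (boolP (anc z y)) => H; [rewrite -(H1 H)|move: (H2 H)]; lia.
- move=> x y nxy; case: (boolP (anc x y)) => H.
    have [c [pc ncr Hc]] := anc_child H nxy.
    exists c; first by rewrite -pc esymm; have [] := par_spec ncr.
    by have [H1 _] := D_par y ncr; rewrite (H1 Hc) pc.
  have nxr : x != r by apply/eqP => xr; move: H; rewrite xr anc_r.
  exists (par x); first by have [] := par_spec nxr.
  by have [_ H2] := D_par y nxr; rewrite (H2 H).
Qed.

Lemma dist_NS x y : dist e x y + 2 * NS [:: x; y] = h x + h y.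
Proof. rewrite -D_eq_dist /D; have := NS2_le x y; have := NS2_le' x y; lia. Qed.

Lemma nest a s b c :
  NS [:: b, c, a & s] = NS [:: b, a & s] \/ NS [:: b, c, a & s] = NS [:: c, a & s].
Proof.
case: (boolP [forall v, [&& anc v a, all (anc v) s & anc v b] ==> anc v c]) => H.
  left; apply: NS_eq => v /=; move/forallP: H => /(_ v).
  by case: (anc v a); case: (all (anc v) s); case: (anc v b); case: (anc v c).
right; move/forallPn: H => [u]; rewrite negb_imply => /andP[/and3P[ua us ub] nuc].
apply: NS_eq => v /=; case: (boolP (anc v c)) => vc; last by rewrite !andbF.
case: (boolP (anc v a)) => va; last by rewrite !andbF.
case: (boolP (all (anc v) s)) => vs; last by rewrite !andbF.
rewrite /= ?andbT; apply/idP; case/orP: (anc_total ua va) => [uv|vu].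
  by rewrite (anc_trans uv vc) in nuc.
by rewrite (anc_trans vu ub).
Qed.

Lemma tri_le a b c :
  [/\ NS [:: a; b; c] <= NS [:: a; b], NS [:: a; b; c] <= NS [:: a; c] &
     NS [:: a; b; c] <= NS [:: b; c]].
Proof.
split.
- by apply: NS_le => v /= /and4P[-> -> _ _].
- by apply: NS_le => v /= /and4P[-> _ -> _].
- by apply: NS_le => v /= /and4P[_ -> -> _].
Qed.

Lemma tri_eq a b c :
  [/\ (NS [:: a; b; c] = NS [:: a; b] \/ NS [:: a; b; c] = NS [:: a; c]),
   (NS [:: a; b; c] = NS [:: a; b] \/ NS [:: a; b; c] = NS [:: b; c]) &
   (NS [:: a; b; c] = NS [:: a; c] \/ NS [:: a; b; c] = NS [:: b; c])].
Proof.
split.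
- have := nest a [::] b c.
  rewrite (@NS_eq [:: b; c; a] [:: a; b; c]); last by move=> v /=; case: (anc v a); case: (anc v b); case: (anc v c).
  rewrite (@NS_eq [:: b; a] [:: a; b]); last by move=> v /=; case: (anc v a); case: (anc v b); case: (anc v c).
  rewrite (@NS_eq [:: c; a] [:: a; c]); last by move=> v /=; case: (anc v a); case: (anc v b); case: (anc v c).
  by [].
- have := nest b [::] a c.
  rewrite (@NS_eq [:: a; c; b] [:: a; b; c]); last by move=> v /=; case: (anc v a); case: (anc v b); case: (anc v c).
  rewrite (@NS_eq [:: c; b] [:: b; c]); last by move=> v /=; case: (anc v a); case: (anc v b); case: (anc v c).
  by [].
- have := nest c [::] a b.
  by [].
Qed.


Lemma arith (a b c d f g t1 t2 t3 t4 m : nat) :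
  (t1 = a /\ t1 = c \/ t1 = a /\ t1 = g \/ t1 = c /\ t1 = g) ->
  (t2 = a /\ t2 = f \/ t2 = a /\ t2 = d \/ t2 = f /\ t2 = d) ->
  (t3 = c /\ t3 = f \/ t3 = c /\ t3 = b \/ t3 = f /\ t3 = b) ->
  (t4 = g /\ t4 = d \/ t4 = g /\ t4 = b \/ t4 = d /\ t4 = b) ->
  t1 <= a -> t1 <= c -> t1 <= g ->
  t2 <= a -> t2 <= f -> t2 <= d ->
  t3 <= c -> t3 <= f -> t3 <= b ->
  t4 <= g -> t4 <= d -> t4 <= b ->
  m <= t1 -> m <= t2 -> m <= t3 -> m <= t4 ->
  (m = t1 \/ m = t2) ->
  minn (a + b) (minn (c + d) (f + g)) + 2 * m = t1 + t2 + t3 + t4.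
Proof.
move=> T1 T2 T3 T4 ? ? ? ? ? ? ? ? ? ? ? ? ? ? ? ? [E|E];
case: T1 => [[? ?]|[[? ?]|[? ?]]]; case: T2 => [[? ?]|[[? ?]|[? ?]]];
case: T3 => [[? ?]|[[? ?]|[? ?]]]; case: T4 => [[? ?]|[[? ?]|[? ?]]]; lia.
Qed.

Ltac ctac v w x y z := move=> v /=; case: (anc v w); case: (anc v x); case: (anc v y); case: (anc v z) => //.

Lemma quad_le w x y z :
  [/\ NS [:: w; x; y; z] <= NS [:: w; x; y], NS [:: w; x; y; z] <= NS [:: w; x; z],
     NS [:: w; x; y; z] <= NS [:: w; y; z] & NS [:: w; x; y; z] <= NS [:: x; y; z]].
Proof. split; apply: NS_le; ctac v w x y z. Qed.

Lemma quad_eq1 w x y z :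
  [/\ NS [:: w; x; y; z] = NS [:: w; x; y] \/ NS [:: w; x; y; z] = NS [:: w; x; z],
      NS [:: w; x; y; z] = NS [:: w; x; y] \/ NS [:: w; x; y; z] = NS [:: w; y; z] &
      NS [:: w; x; y; z] = NS [:: w; x; z] \/ NS [:: w; x; y; z] = NS [:: w; y; z]].
Proof.
split.
- have := nest w [:: x] y z.
  rewrite (@NS_eq [:: y; z; w; x] [:: w; x; y; z]); last by ctac v w x y z.
  rewrite (@NS_eq [:: y; w; x] [:: w; x; y]); last by ctac v w x y z.
  rewrite (@NS_eq [:: z; w; x] [:: w; x; z]); last by ctac v w x y z.
  by [].
- have := nest w [:: y] x z.
  rewrite (@NS_eq [:: x; z; w; y] [:: w; x; y; z]); last by ctac v w x y z.
  rewrite (@NS_eq [:: x; w; y] [:: w; x; y]); last by ctac v w x y z.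
  rewrite (@NS_eq [:: z; w; y] [:: w; y; z]); last by ctac v w x y z.
  by [].
- have := nest w [:: z] x y.
  rewrite (@NS_eq [:: x; y; w; z] [:: w; x; y; z]); last by ctac v w x y z.
  rewrite (@NS_eq [:: x; w; z] [:: w; x; z]); last by ctac v w x y z.
  rewrite (@NS_eq [:: y; w; z] [:: w; y; z]); last by ctac v w x y z.
  by [].
Qed.

Lemma tri3 a b c : let t := NS [:: a; b; c] in let p := NS [:: a; b] in
  let q := NS [:: a; c] in let u := NS [:: b; c] in
  (t = p /\ t = q \/ t = p /\ t = u \/ t = q /\ t = u).
Proof.
have [H1 H2 H3] := tri_eq a b c.
move: H1 H2 H3 => /=.
set t := NS _; set p := NS _; set q := NS _; set u := NS _.
move=> [H1|H1] [H2|H2] [H3|H3]; tauto.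
Qed.

Lemma max4_id w x y z :
  max4 e w x y z + 2 * (NS [:: w; x; y] + NS [:: w; x; z] + NS [:: w; y; z] + NS [:: x; y; z])
  = h w + h x + h y + h z + 4 * NS [:: w; x; y; z].
Proof.
rewrite /max4.
have := dist_NS w x; have := dist_NS y z; have := dist_NS w y; have := dist_NS x z;
have := dist_NS w z; have := dist_NS x y.
have [l1 l2 l3] := tri_le w x y; have [l4 l5 l6] := tri_le w x z;
have [l7 l8 l9] := tri_le w y z; have [l10 l11 l12] := tri_le x y z.
have [m1 m2 m3 m4] := quad_le w x y z; have [Q _ _] := quad_eq1 w x y z.
have A := arith (tri3 w x y) (tri3 w x z) (tri3 w y z) (tri3 x y z)
  l1 l2 l3 l4 l5 l6 l7 l8 l9 l10 l11 l12 m1 m2 m3 m4 Q.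
lia.
Qed.

Definition nb v := [set y | e v y].

Lemma par_nb v : v != r -> par v \in nb v.
Proof. by move=> nvr; rewrite inE; have [] := par_spec nvr. Qed.

Lemma child_nb c : c != r -> par c \in nb c /\ c \in nb (par c).
Proof. by move=> ncr; rewrite !inE; have [H _] := par_spec ncr; rewrite H esymm H. Qed.

Lemma internal_child v : v != r -> deg e v != 1 -> exists c, par c = v /\ c != r.
Proof.
move=> nvr dv.
have : ~~ (nb v \subset [set par v]).
  apply/negP => Hs; move: dv; rewrite /deg -/(nb v).
  have -> : nb v = [set par v].
    by apply/eqP; rewrite eqEsubset Hs sub1set par_nb.
  by rewrite cards1.
move=> /subsetPn[z]; rewrite !inE => evz nzp.
case: (edge_par evz) => [zp|vp]; first by rewrite zp eqxx in nzp.
exists z; split => //; apply/eqP => zr; move: nvr; by rewrite vp zr par_r eqxx.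
Qed.

Lemma deg_ge2 v c : v != r -> par c = v -> c != r -> 1 < deg e v.
Proof.
move=> nvr pc ncr; rewrite /deg -/(nb v).
have H1 : par v \in nb v := par_nb nvr.
have H2 : c \in nb v by rewrite -pc; case: (child_nb ncr).
have ne : c != par v.
  apply/eqP => E; have [_ h1] := par_spec ncr; have [_ h2] := par_spec nvr.
  move: h1 h2; rewrite pc -E; lia.
apply: (@leq_trans #|[set c; par v]|); first by rewrite cards2 ne.
by apply: subset_leq_card; apply/subsetP => y /set2P[]->.
Qed.

Lemma leaf_anc v x : v != r -> deg e v = 1 -> anc v x -> x = v.
Proof.
move=> nvr dv avx; case: (eqVneq v x) => [//|nvx].
have [c [pc ncr _]] := anc_child avx nvx.
by have := deg_ge2 nvr pc ncr; rewrite dv.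
Qed.

Lemma leaf_exists : 2 <= #|V| -> exists2 x, x != r & deg e x = 1.
Proof.
move=> H2.
have /set0Pn[y] : [set~ r] != set0 by rewrite -card_gt0 cardsC1; lia.
rewrite !inE => nyr.
case: (@arg_maxnP V r xpredT h isT) => x _ Hx.
have hy : 0 < h y by rewrite lt0n; apply/eqP => /h0 yr; rewrite yr eqxx in nyr.
have nxr : x != r by apply/eqP => xr; have := Hx y isT; rewrite xr h_r; lia.
exists x => //; rewrite /deg -/(nb x).
have -> : nb x = [set par x]; last by rewrite cards1.
apply/setP => z; rewrite !inE; apply/idP/eqP => [exz|->]; last by have [] := par_spec nxr.
case: (edge_par exz) => // xp.
have nzr : z != r by apply/eqP => zr; move: nxr; rewrite xp zr par_r eqxx.
have [_ hz] := par_spec nzr; have := Hx z isT; rewrite xp; lia.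
Qed.

Lemma internal_exists : 3 <= #|V| -> exists r' : V, deg e r' != 1.
Proof.
move=> H3; case: (eqVneq (deg e r) 1) => dr; last by exists r.
have [c Hc] : exists c, nb r = [set c] by apply/cards1P; rewrite -dr.
case: (eqVneq (deg e c) 1) => dc; last by exists c.
exfalso.
have ncr : c != r by apply/eqP => cr; have := set11 c; rewrite -Hc cr inE eirr.
have Hall : forall x, x \in [set r; c].
  move=> x; rewrite !inE; case: (eqVneq x r) => //= nxr.
  have hx : 0 < h x by rewrite lt0n; apply/eqP => /h0 xr; rewrite xr eqxx in nxr.
  set a := iter (h x).-1 par x.
  have ha : h a = 1 by rewrite /a h_iter; lia.
  have nar : a != r by apply/eqP => ar; move: ha; rewrite ar h_r.
  have pa : par a = r by rewrite /a -iterS prednK // iter_ge.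
  have : a \in nb r by rewrite -pa; case: (child_nb nar).
  rewrite Hc inE => /eqP ac.
  have : anc a x by apply/ancP; exists (h x).-1.
  by rewrite ac => /(leaf_anc ncr dc) ->; rewrite eqxx.
have : #|[set: V]| <= #|[set r; c]|.
  by apply: subset_leq_card; apply/subsetP => x _; apply: Hall.
rewrite cardsT cards2; lia.
Qed.

Lemma outside_exists v : v != r -> deg e r != 1 -> exists y, [/\ ~~ anc v y, y != v & y != par v].
Proof.
move=> nvr dr; case: (eqVneq (par v) r) => pv; last first.
  exists r; split => //; last by rewrite eq_sym.
  by apply/negP => /anc_of_r vr; rewrite vr eqxx in nvr.
  by rewrite eq_sym.
have : ~~ (nb r \subset [set v]).
  apply/negP => Hs; move: dr; rewrite /deg -/(nb r).
  have -> : nb r = [set v].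
    by apply/eqP; rewrite eqEsubset Hs sub1set; have [_] := child_nb nvr; rewrite pv.
  by rewrite cards1.
move=> /subsetPn[z]; rewrite !inE => erz nzv.
case: (edge_par erz) => [zp|rp]; first by move: erz; rewrite zp par_r eirr.
have nzr : z != r by apply/eqP => zr; move: erz; rewrite zr eirr.
exists z; split => //; last by rewrite pv; apply/eqP => zr; rewrite zr eqxx in nzr.
apply/negP => avz; have [_ hz] := par_spec nzr; have [_ hv] := par_spec nvr.
move: hz hv; rewrite -rp pv => hz hv.
by have := anc_eq avz; rewrite -hz -hv => /(_ erefl) vz; rewrite vz eqxx in nzv.
Qed.

Section Core.
Import GRing.Theory Num.Theory.
Local Open Scope ring_scope.
Variable R : realFieldType.

Definition Pint v := (deg e v != 1%N) && (v != r).

Lemma termid (p q : bool) (al be : R) :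
  al * (p && q)%:R + be * (p || q)%:R = be * p%:R + be * q%:R + (al - be) * (p%:R * q%:R).
Proof. by case: p; case: q => /=; ring. Qed.

Lemma anc_S v x : x != r -> anc v x = (v == x) || anc v (par x).
Proof.
move=> nxr; case: (eqVneq v x) => [->|nvx] /=; first by rewrite anc_refl.
case: (boolP (anc v (par x))) => [/anc_par -> //|H].
by case: (boolP (anc v x)) => // /anc_cases [vx|H']; [rewrite vx eqxx in nvx|rewrite H' in H].
Qed.

Lemma not_anc_par x : x != r -> ~~ anc x (par x).
Proof. by move=> nxr; apply/negP => /anc_h; rewrite h_par; have [_ hp] := par_spec nxr; lia. Qed.

Definition gfun (b : R) (be : V -> R) x := b * (h x)%:R + \sum_(v | Pint v) be v * (anc v x)%:R.

Lemma gfun_par b be x : x != r ->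
  gfun b be x = gfun b be (par x) + b + (if Pint x then be x else 0).
Proof.
move=> nxr; rewrite /gfun; have [_ hp] := par_spec nxr.
rewrite -hp -addn1 natrD.
have -> : \sum_(v | Pint v) be v * (anc v x)%:R =
   \sum_(v | Pint v) be v * (anc v (par x))%:R + \sum_(v | Pint v) be v * (v == x)%:R.
  rewrite -big_split /=; apply: eq_bigr => v _; rewrite anc_S //.
  case: (eqVneq v x) => [->|] /=; last by rewrite mulr0 addr0.
  by rewrite (negbTE (not_anc_par nxr)) /= mulr0 add0r.
case: (boolP (Pint x)) => Px.
  have -> : \sum_(v | Pint v) be v * (v == x)%:R = be x.
    rewrite (bigD1 x) //= eqxx mulr1 big1 ?addr0 // => v /andP[_ /negbTE->]; by rewrite mulr0.
  ring.
have -> : \sum_(v | Pint v) be v * (v == x)%:R = 0.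
  by apply: big1 => v Pv; case: (eqVneq v x) => [vx|]; [move: Pv; rewrite vx (negbTE Px)|rewrite mulr0].
rewrite /=; ring.
Qed.

Lemma gfun_r b be : gfun b be r = 0.
Proof.
rewrite /gfun h_r mulr0 add0r big1 // => v /andP[_ nvr].
by case: (boolP (anc v r)) => [/anc_of_r vr|]; [rewrite vr eqxx in nvr|rewrite mulr0].
Qed.

Lemma core (a b : R) (al be : V -> R) :
  (3 <= #|V|)%N -> deg e r != 1%N ->
  (forall w x, w != x -> a + b * (h w + h x)%:R +
     \sum_(v | Pint v) (al v * (anc v w && anc v x)%:R + be v * (anc v w || anc v x)%:R) = 0) ->
  [/\ a = 0, b = 0 & forall v, Pint v -> al v = 0 /\ be v = 0].
Proof.
move=> H3 dr HL.
pose K w x := \sum_(v | Pint v) (al v - be v) * ((anc v w)%:R * (anc v x)%:R).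
have HgK : forall w x, w != x -> a + gfun b be w + gfun b be x + K w x = 0.
  move=> w x nwx; rewrite -(HL w x nwx) /gfun /K natrD.
  under [X in _ = _ + _ * _ + X]eq_bigr do rewrite termid.
  rewrite !big_split /=; ring.
have Hg : forall v, Pint v -> al v - be v = 0.
  move=> v Pv; have /andP[dv nvr] := Pv.
  have [c [pc ncr]] := internal_child nvr dv.
  have [y [nay nyv nyp]] := outside_exists nvr dr.
  have [_ hc] := par_spec ncr; have [_ hv] := par_spec nvr.
  have nvc : v != c by apply/eqP => vc; move: hc; rewrite pc vc; lia.
  have npc : par v != c by apply/eqP => E; move: hc hv; rewrite pc -E; lia.
  have avc : anc v c by apply/ancP; exists 1%N; rewrite /= pc.
  have E0 : K v c + K (par v) y - K v y - K (par v) c = 0.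
    have H2 : par v != y by rewrite eq_sym.
    have H3' : v != y by rewrite eq_sym.
    have := HgK _ _ nvc; have := HgK _ _ H2; have := HgK _ _ H3'.
    have := HgK _ _ npc.
    move=> G1 G2 G3 G4; lra.
  rewrite -E0 /K -big_split -!sumrB /= (bigD1 v) //= big1 /=.
    rewrite anc_refl avc (negbTE nay) (negbTE (not_anc_par nvr)) /=; ring.
  move=> u /andP[/andP[_ nur] nuv].
  rewrite (anc_S u nvr) (negbTE nuv) /=; ring.
have HK : forall w x, K w x = 0.
  by move=> w x; rewrite /K big1 // => v Pv; rewrite Hg // mul0r.
have Ha : forall x, x != r -> gfun b be x = - a.
  move=> x nxr; have := HgK _ _ nxr; rewrite gfun_r HK; lra.
have [x1 [x2 [n1 n2 n12]]] : exists x1 x2, [/\ x1 != r, x2 != r & x1 != x2].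
  have : (1 < #|[set~ r]|)%N by rewrite cardsC1; lia.
  case/card_gt1P => x1 [x2 [H1 H2 H12]]; exists x1, x2; move: H1 H2; rewrite !inE => H1 H2.
  by split.
have a0 : a = 0.
  by have := HgK _ _ n12; rewrite HK (Ha _ n1) (Ha _ n2); lra.
have g0 : forall x, gfun b be x = 0.
  move=> x; case: (eqVneq x r) => [->|nxr]; first exact: gfun_r.
  by rewrite Ha // a0 oppr0.
have [l nlr dl] := leaf_exists (ltnW H3).
have b0 : b = 0.
  have := gfun_par b be nlr; rewrite !g0 /Pint dl eqxx /=; lra.
have be0 : forall v, Pint v -> be v = 0.
  move=> v Pv; have /andP[_ nvr] := Pv.
  by have := gfun_par b be nvr; rewrite !g0 Pv b0; lra.
split => // v Pv; split; last exact: be0.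
by have := Hg v Pv; rewrite be0 //; lra.
Qed.

End Core.

Section Mat.
Import GRing.Theory Num.Theory.
Local Open Scope ring_scope.
Variable R : realFieldType.
Hypothesis dr : deg e r != 1%N.

Definition Int := [set v | deg e v != 1%N].
Definition SI := {x : V | x \in Int}.
Definition J := (SI * bool)%type.
Lemma r_in : r \in Int. Proof. by rewrite inE. Qed.
Definition r0 : SI := exist _ r r_in.

Definition ins v : SI := insubd r0 v.

Definition Xf (w x : V) (j : J) : R :=
  let v := val j.1 in
  if v == r then (if j.2 then (h w + h x)%:R else 1)
  else (if j.2 then (anc v w || anc v x)%:R else (anc v w && anc v x)%:R).

Definition Yf (w x : V) (j : J) : R :=
  let v := val j.1 in
  if v == r then (if j.2 then 1 else (h w + h x)%:R)
  else (if j.2 then -2 * (anc v w && anc v x)%:R else -2 * (anc v w || anc v x)%:R).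

Lemma Xf_sym w x j : Xf w x j = Xf x w j.
Proof. by rewrite /Xf addnC orbC andbC. Qed.
Lemma Yf_sym w x j : Yf w x j = Yf x w j.
Proof. by rewrite /Yf addnC orbC andbC. Qed.

Lemma sumJ (F : J -> R) : \sum_(j : J) F j = \sum_(s : SI) (F (s, false) + F (s, true)).
Proof.
have -> : \sum_(j : J) F j = \sum_(j : J) F (j.1, j.2) by apply: eq_bigr => [[]].
rewrite -(pair_bigA _ (fun s b => F (s, b))) /=; apply: eq_bigr => s _; by rewrite big_bool addrC.
Qed.

Lemma sumSI (G : V -> R) : \sum_(s : SI) G (val s) = G r + \sum_(v | Pint v) G v.
Proof.
rewrite -(big_sub (fun v => v \in Int)) (bigD1 r) /=; last by rewrite inE.
congr (_ + _); apply: eq_bigl => v; by rewrite /Pint inE.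
Qed.

Lemma insK (s : SI) : ins (val s) = s.
Proof. exact: valKd. Qed.

Lemma sumX (c : J -> R) w x :
  \sum_(j : J) c j * Xf w x j = c (r0, false) + c (r0, true) * (h w + h x)%:R +
   \sum_(v | Pint v) (c (ins v, false) * (anc v w && anc v x)%:R +
                     c (ins v, true) * (anc v w || anc v x)%:R).
Proof.
rewrite sumJ.
pose G := fun v => if v == r then c (r0, false) + c (r0, true) * (h w + h x)%:R else
     (c (ins v, false) * (anc v w && anc v x)%:R + c (ins v, true) * (anc v w || anc v x)%:R).
have -> : \sum_(s : SI) (c (s, false) * Xf w x (s, false) + c (s, true) * Xf w x (s, true)) =
   \sum_(s : SI) G (val s).
  apply: eq_bigr => s _ /=; rewrite /Xf /G /=; case: (eqVneq (val s) r) => [E|NE].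
    have -> : s = r0 by apply: val_inj; rewrite E.
    by rewrite mulr1.
  by rewrite insK.
rewrite (sumSI G) /G eqxx; congr (_ + _); apply: eq_bigr => v /andP[_ /negbTE->] //.
Qed.

Lemma sumY (c : J -> R) w x :
  \sum_(j : J) c j * Yf w x j = c (r0, true) + c (r0, false) * (h w + h x)%:R +
   \sum_(v | Pint v) ((-2 * c (ins v, true)) * (anc v w && anc v x)%:R +
                     (-2 * c (ins v, false)) * (anc v w || anc v x)%:R).
Proof.
rewrite sumJ.
pose G := fun v => if v == r then c (r0, true) + c (r0, false) * (h w + h x)%:R else
     ((-2 * c (ins v, true)) * (anc v w && anc v x)%:R +
      (-2 * c (ins v, false)) * (anc v w || anc v x)%:R).
have -> : \sum_(s : SI) (c (s, false) * Yf w x (s, false) + c (s, true) * Yf w x (s, true)) =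
   \sum_(s : SI) G (val s).
  apply: eq_bigr => s _ /=; rewrite /Yf /G /=; case: (eqVneq (val s) r) => [E|NE].
    have -> : s = r0 by apply: val_inj; rewrite E.
    by rewrite /= mulr1 addrC.
  by rewrite insK; ring.
rewrite (sumSI G) /G eqxx; congr (_ + _); apply: eq_bigr => v /andP[_ /negbTE->] //.
Qed.

Lemma c_zero (c : J -> R) : (3 <= #|V|)%N ->
  (forall w x, w != x -> \sum_(j : J) c j * Xf w x j = 0) -> forall j, c j = 0.
Proof.
move=> H3 H.
have [Ha Hb Hv] := core H3 dr (fun w x nwx => etrans (esym (sumX c w x)) (H w x nwx)).
move=> [s b]; case: (eqVneq (val s) r) => [E|NE].
  have -> : s = r0 by apply: val_inj; rewrite E.
  by case: b.
have Ps : Pint (val s) by rewrite /Pint NE andbT -(in_set (fun v => deg e v != 1%N)); exact: valP s.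
have [H1 H2] := Hv _ Ps; rewrite insK in H1 H2; by case: b.
Qed.

Lemma c_zeroY (c : J -> R) : (3 <= #|V|)%N ->
  (forall w x, w != x -> \sum_(j : J) c j * Yf w x j = 0) -> forall j, c j = 0.
Proof.
move=> H3 H.
have [Ha Hb Hv] := core H3 dr (fun w x nwx => etrans (esym (sumY c w x)) (H w x nwx)).
move=> [s b]; case: (eqVneq (val s) r) => [E|NE].
  have -> : s = r0 by apply: val_inj; rewrite E.
  by case: b.
have Ps : Pint (val s) by rewrite /Pint NE andbT -(in_set (fun v => deg e v != 1%N)); exact: valP s.
have [H1 H2] := Hv _ Ps; rewrite insK in H1 H2.
by case: b; lra.
Qed.

End Mat.

Section Entry.
Import GRing.Theory Num.Theory.
Local Open Scope ring_scope.
Variable R : realFieldType.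
Hypothesis dr : deg e r != 1%N.

Definition pw (A : {set V}) := nth r (enum A) 0.
Definition px (A : {set V}) := nth r (enum A) 1.

Lemma enum_pair (A : {set V}) : #|A| = 2%N -> pw A != px A /\ enum A = [:: pw A; px A].
Proof.
move=> H; have := cardE A; rewrite H /pw /px; have := enum_uniq A.
case: (enum A) => [|a [|b [|c l]]] //= Hu _.
by move: Hu; rewrite inE andbT => Hab.
Qed.

Lemma pair_of w x : w != x ->
  (pw [set w; x] = w /\ px [set w; x] = x) \/ (pw [set w; x] = x /\ px [set w; x] = w).
Proof.
move=> nwx; have H2 : #|[set w; x]| = 2%N by rewrite cards2 nwx.
have [Hne Hen] := enum_pair H2.
have Hw : pw [set w; x] \in [set w; x] by rewrite -mem_enum Hen inE eqxx.
have Hx : px [set w; x] \in [set w; x] by rewrite -mem_enum Hen !inE eqxx orbT.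
move: Hne; case/set2P: Hw => ->; case/set2P: Hx => -> //; rewrite ?eqxx //; by [left|right].
Qed.

Lemma NSsum s : ((NS s)%:R : R) = \sum_(v | v != r) (all (anc v) s)%:R.
Proof.
rewrite /NS -sum1_card natr_sum big_mkcond [RHS]big_mkcond /=; apply: eq_bigr => v _.
by rewrite inE; case: (v != r); case: (all _ _).
Qed.

Lemma entry_id w x y z : w != x -> y != z ->
  ((max4 e w x y z)%:R : R) = \sum_(j : J) Xf R w x j * Yf R y z j.
Proof.
move=> nwx nyz; rewrite sumJ.
pose G := fun v => if v == r then ((h y + h z)%:R + (h w + h x)%:R : R) else
  -2 * ((anc v w && anc v x)%:R * (anc v y || anc v z)%:R +
        (anc v w || anc v x)%:R * (anc v y && anc v z)%:R).
have -> : \sum_(s : SI) (Xf R w x (s, false) * Yf R y z (s, false) +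
                         Xf R w x (s, true) * Yf R y z (s, true)) = \sum_(s : SI) G (val s).
  by apply: eq_bigr => s _; rewrite /Xf /Yf /G /=; case: (eqVneq (val s) r) => _; ring.
rewrite (sumSI dr G) /G eqxx.
have -> : \sum_(v | Pint v) G v = -2 * \sum_(v | v != r)
   ((all (anc v) [:: w; x; y])%:R + (all (anc v) [:: w; x; z])%:R +
    (all (anc v) [:: w; y; z])%:R + (all (anc v) [:: x; y; z])%:R -
    2 * (all (anc v) [:: w; x; y; z])%:R).
  rewrite mulr_sumr big_mkcond [RHS]big_mkcond /=; apply: eq_bigr => v _.
  rewrite /G /Pint; case: (eqVneq v r) => [->|nvr]; first by rewrite andbF.
  rewrite andbT /=; case: (eqVneq (deg e v) 1%N) => dv /=.
    have L := leaf_anc nvr dv.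
    have n1 : ~~ (anc v w && anc v x).
      by apply/negP => /andP[/L a /L b]; rewrite a b eqxx in nwx.
    have n2 : ~~ (anc v y && anc v z).
      by apply/negP => /andP[/L a /L b]; rewrite a b eqxx in nyz.
    move: n1 n2; case: (anc v w); case: (anc v x); case: (anc v y); case: (anc v z) => //= _ _; ring.
  by case: (anc v w); case: (anc v x); case: (anc v y); case: (anc v z) => /=; ring.
rewrite sumrB !big_split -mulr_sumr -!NSsum.
have M := congr1 (fun n : nat => (n%:R : R)) (max4_id w x y z).
move: M; rewrite !natrD ?natrM => M; rewrite /=.
lra.
Qed.

End Entry.

Section Final.
Import GRing.Theory Num.Theory.
Local Open Scope ring_scope.
Variable R : realFieldType.
Hypothesis dr : deg e r != 1%N.

Lemma sum_enumJ (F : J -> R) : \sum_(j < #|{: J}|) F (enum_val j) = \sum_(j : J) F j.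
Proof. by rewrite -(big_enum_val F); apply: eq_bigl => j; rewrite inE. Qed.

Lemma card_pair (w x : V) : w != x -> #|[set w; x]| == 2%N.
Proof. by move=> H; rewrite cards2 H. Qed.

Lemma rank_main : (3 <= #|V|)%N -> \rank (Max4PC e R) = #|{: J}|.
Proof.
move=> H3.
pose X : 'M[R]_(#|{: pairs V}|, #|{: J}|) :=
  \matrix_(i, j) Xf R (pw (val (enum_val i))) (px (val (enum_val i))) (enum_val j).
pose Y : 'M[R]_(#|{: pairs V}|, #|{: J}|) :=
  \matrix_(i, j) Yf R (pw (val (enum_val i))) (px (val (enum_val i))) (enum_val j).
have HM : Max4PC e R = X *m Y^T.
  apply/matrixP => i k; rewrite !mxE.
  have HA : #|val (enum_val i)| = 2%N by apply/eqP; exact: (valP (enum_val i)).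
  have HB : #|val (enum_val k)| = 2%N by apply/eqP; exact: (valP (enum_val k)).
  rewrite /max4pc_entry; have [nA EA] := enum_pair HA; have [nB EB] := enum_pair HB.
  rewrite EA EB /= (entry_id R dr nA nB).
  rewrite -(sum_enumJ (fun j => Xf R (pw (val (enum_val i))) (px (val (enum_val i))) j *
                               Yf R (pw (val (enum_val k))) (px (val (enum_val k))) j)).
  by apply: eq_bigr => j _; rewrite !mxE.
have FX : row_free X^T.
  apply: inj_row_free => v Hv.
  pose c := fun j : J => v 0 (enum_rank j).
  have Hc : forall w x, w != x -> \sum_(j : J) c j * Xf R w x j = 0.
    move=> w x nwx; pose pp : pairs V := exist _ [set w; x] (card_pair nwx).
    transitivity (\sum_(j < #|{: J}|) v 0 j * Xf R (pw [set w; x]) (px [set w; x]) (enum_val j)).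
      rewrite -(sum_enumJ (fun j => c j * Xf R w x j)); apply: eq_big => // j _; rewrite /c enum_valK.
      by case: (pair_of nwx) => [[-> ->]|[-> ->]] //; rewrite Xf_sym.
    have := congr1 (fun M : 'rV[R]_(#|{: pairs V}|) => M 0 (enum_rank pp)) Hv; rewrite !mxE => Hz.
    apply: etrans Hz; apply: eq_big => // j _; by rewrite !mxE enum_rankK.
  have Z := c_zero dr H3 Hc.
  by apply/rowP => k; rewrite !mxE; have := Z (enum_val k); rewrite /c enum_valK.
have FY : row_free Y^T.
  apply: inj_row_free => v Hv.
  pose c := fun j : J => v 0 (enum_rank j).
  have Hc : forall w x, w != x -> \sum_(j : J) c j * Yf R w x j = 0.
    move=> w x nwx; pose pp : pairs V := exist _ [set w; x] (card_pair nwx).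
    transitivity (\sum_(j < #|{: J}|) v 0 j * Yf R (pw [set w; x]) (px [set w; x]) (enum_val j)).
      rewrite -(sum_enumJ (fun j => c j * Yf R w x j)); apply: eq_big => // j _; rewrite /c enum_valK.
      by case: (pair_of nwx) => [[-> ->]|[-> ->]] //; rewrite Yf_sym.
    have := congr1 (fun M : 'rV[R]_(#|{: pairs V}|) => M 0 (enum_rank pp)) Hv; rewrite !mxE => Hz.
    apply: etrans Hz; apply: eq_big => // j _; by rewrite !mxE enum_rankK.
  have Z := c_zeroY dr H3 Hc.
  by apply/rowP => k; rewrite !mxE; have := Z (enum_val k); rewrite /c enum_valK.
rewrite HM mxrankMfree // -mxrank_tr; exact: (eqP FX).
Qed.

End Final.

End Rooted.

Theorem theorem1 (R : realFieldType) (V : finType) (e : rel V) (n p : nat) :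
  is_tree e -> #|V| = n -> 3 <= n -> npendant e = p ->
  \rank (Max4PC e R) = 2 * (n - p).
Proof.
move=> [esymm eirr econn eacyc] Hn H3 Hp.
have H3' : 3 <= #|V| by rewrite Hn.
have /card_gt0P [v0 _] : 0 < #|V| by rewrite Hn; lia.
have [r dr] := internal_exists esymm eirr econn v0 H3'.
rewrite (rank_main esymm eirr econn eacyc R dr H3') card_prod card_bool card_sig.
have -> : #|[pred x | x \in Int e]| = #|Int e| by apply: eq_card => x; rewrite inE.
rewrite (cardsCs (Int e)) mulnC -Hn -Hp /npendant.
have -> : ~: Int e = [set x | deg e x == 1] by apply/setP => x; rewrite !inE negbK.
by [].
Qed.
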